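(* Let $m\ge 2$ be an integer. Then, as formal power series in $q$ (equivalently, for $|q|<1$), $$\sum_{n=1}^\infty \frac{q^n\left(1-q^{(m-1)n}\right)(q^{mn};q^m)_\infty}{(1-q^n)\,(q^{n+1};q)_{(m-1)n}\,(q^{mn};q)_\infty} = -1 + \frac{(q^m;q^m)_\infty}{(q;q)_\infty}.$$
   Context: Standard $q$-Pochhammer notation: $(a;q)_n=(1-a)(1-aq)\cdots(1-aq^{n-1})$ and $(a;q)_\infty=\prod_{k=0}^\infty(1-aq^k)$. *)

(* Defs.v *)
From Stdlib Require Import Reals.
From Coquelicot Require Import Coquelicot.

Fixpoint qpoch (a q : C) (n : nat) : C :=
  match n with
  | O => 1%C
  | S k => Cmult (qpoch a q k) (Cminus 1%C (Cmult a (pow_n q k)))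
  end.

(* When the partial products converge (e.g. |q|<1)
   this is exactly their limit. *)
Definition qpinf (a q : C) : C :=
  (real (Lim_seq (fun N => fst (qpoch a q N))),
   real (Lim_seq (fun N => snd (qpoch a q N)))).

Definition cor7_term (m : nat) (q : C) (n : nat) : C :=
  Cdiv (Cmult (Cmult (pow_n q n) (Cminus 1%C (pow_n q ((m - 1) * n))))
              (qpinf (pow_n q (m * n)) (pow_n q m)))
       (Cmult (Cmult (Cminus 1%C (pow_n q n))
                     (qpoch (pow_n q (n + 1)) q ((m - 1) * n)))
              (qpinf (pow_n q (m * n)) q)).

(* Main.v *)
Require Import Defs.
From Stdlib Require Import Reals Lra Lia.
From Coquelicot Require Import Coquelicot.
Open Scope C_scope.


Lemma pow_n_S (q : C) n : pow_n q (S n) = q * pow_n q n.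
Proof. reflexivity. Qed.
Lemma pow_n_O (q : C) : pow_n q 0 = (1:C).
Proof. reflexivity. Qed.
Lemma pow_n_add (q : C) a b : pow_n q (a + b) = pow_n q a * pow_n q b.
Proof. exact (pow_n_plus q a b). Qed.
Lemma pow_n_mul (q : C) a b : pow_n q (a * b) = pow_n (pow_n q a) b.
Proof.
  induction b as [|b IH].
  - rewrite Nat.mul_0_r. reflexivity.
  - rewrite Nat.mul_succ_r, pow_n_add, IH, pow_n_S.
    apply Cmult_comm.
Qed.
Lemma Cmod_pow_n (q : C) n : Cmod (pow_n q n) = (Cmod q ^ n)%R.
Proof.
  induction n as [|n IH]; simpl.
  - apply Cmod_1.
  - change (mult q (pow_n q n)) with (q * pow_n q n). rewrite Cmod_mult, IH. reflexivity.
Qed.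

Lemma qpoch_S a q n : qpoch a q (S n) = qpoch a q n * (1 - a * pow_n q n).
Proof. reflexivity. Qed.

Lemma Cmod_1m (x : C) : (Cmod (1 - x) <= 1 + Cmod x)%R.
Proof. unfold Cminus. eapply Rle_trans. apply Cmod_triangle. rewrite Cmod_opp, Cmod_1. lra. Qed.

Lemma exp_mono x y : (x <= y)%R -> (exp x <= exp y)%R.
Proof. intros [H|H]. left; apply exp_increasing; auto. subst; lra. Qed.

Lemma qpoch_norm_le a q N : (Cmod q < 1)%R ->
  (Cmod (qpoch a q N) <= exp (Cmod a * (1 - Cmod q ^ N) / (1 - Cmod q)))%R.
Proof.
  intros Hs. pose proof (Cmod_ge_0 q). pose proof (Cmod_ge_0 a).
  induction N as [|N IH].
  - simpl. rewrite Cmod_1. replace (Cmod a * (1 - 1) / (1 - Cmod q))%R with 0%R by (field; lra).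
    rewrite exp_0; lra.
  - rewrite qpoch_S, Cmod_mult.
    eapply Rle_trans. apply Rmult_le_compat. apply Cmod_ge_0. apply Cmod_ge_0. exact IH.
    apply Cmod_1m.
    rewrite Cmod_mult, Cmod_pow_n.
    eapply Rle_trans. apply Rmult_le_compat_l. left; apply exp_pos. apply exp_ineq1_le.
    rewrite <- exp_plus. apply exp_mono. right. simpl. field. lra.
Qed.

Definition Ebd (a q : C) : R := exp (Cmod a / (1 - Cmod q)).

Lemma qpoch_norm_E a q N : (Cmod q < 1)%R -> (Cmod (qpoch a q N) <= Ebd a q)%R.
Proof.
  intros Hs. eapply Rle_trans. apply qpoch_norm_le; auto. unfold Ebd. apply exp_mono.
  pose proof (Cmod_ge_0 q). pose proof (Cmod_ge_0 a).
  pose proof (pow_le (Cmod q) N H).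
  unfold Rdiv. apply Rmult_le_compat_r. left; apply Rinv_0_lt_compat; lra.
  rewrite <- (Rmult_1_r (Cmod a)) at 2. apply Rmult_le_compat_l; lra.
Qed.

Lemma qpoch_diff a q N j : (Cmod q < 1)%R ->
  (Cmod (qpoch a q (N + j) - qpoch a q N) <=
     Ebd a q * Cmod a * Cmod q ^ N * (1 - Cmod q ^ j) / (1 - Cmod q))%R.
Proof.
  intros Hs. pose proof (Cmod_ge_0 q). pose proof (Cmod_ge_0 a).
  induction j as [|j IH].
  - rewrite Nat.add_0_r. unfold Cminus. rewrite Cplus_opp_r, Cmod_0. simpl.
    replace (Ebd a q * Cmod a * Cmod q ^ N * (1 - 1) / (1 - Cmod q))%R with 0%R by (field; lra). lra.
  - rewrite Nat.add_succ_r, qpoch_S.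
    replace (qpoch a q (N + j) * (1 - a * pow_n q (N + j)) - qpoch a q N) with
      ((qpoch a q (N + j) - qpoch a q N) + - (qpoch a q (N + j) * a * pow_n q (N + j))) by ring.
    eapply Rle_trans. apply Cmod_triangle. rewrite Cmod_opp, !Cmod_mult, Cmod_pow_n.
    eapply Rle_trans. apply Rplus_le_compat_l. apply Rmult_le_compat_r. apply pow_le; auto.
    apply Rmult_le_compat_r. auto. apply qpoch_norm_E; auto.
    apply Rle_trans with (Ebd a q * Cmod a * Cmod q ^ N * (1 - Cmod q ^ j) / (1 - Cmod q) +
      Ebd a q * Cmod a * Cmod q ^ (N + j))%R. lra.
    right. rewrite pow_add. simpl. field. lra.
Qed.

Definition cvC (u : nat -> C) (l : C) : Prop :=
  forall eps : R, (0 < eps)%R -> exists N, forall n, (N <= n)%nat -> (Cmod (u n - l) < eps)%R.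

Lemma sqrt2_lt_2 : (sqrt 2 < 2)%R.
Proof.
  pose proof (sqrt_sqrt 2 ltac:(lra)). pose proof (sqrt_pos 2). nra.
Qed.

Lemma cvC_unique u l l' : cvC u l -> cvC u l' -> l = l'.
Proof.
  intros H1 H2. cut (l - l' = 0). { intros E. replace l with ((l - l') + l') by ring. rewrite E. ring. }
  apply Cmod_eq_0. destruct (Cmod_ge_0 (l - l')) as [Hp|Hp]; [|auto].
  exfalso. set (e := (Cmod (l - l') / 2)%R).
  destruct (H1 e ltac:(unfold e; lra)) as [N1 HN1].
  destruct (H2 e ltac:(unfold e; lra)) as [N2 HN2].
  specialize (HN1 (N1 + N2)%nat ltac:(lia)). specialize (HN2 (N1 + N2)%nat ltac:(lia)).
  assert (Cmod (l - l') <= Cmod (u (N1+N2)%nat - l) + Cmod (u (N1+N2)%nat - l'))%R.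
  { replace (l - l') with (- (u (N1+N2)%nat - l) + (u (N1+N2)%nat - l')) by ring.
    eapply Rle_trans. apply Cmod_triangle. rewrite Cmod_opp. lra. }
  unfold e in *. lra.
Qed.

Lemma cvC_closure u l c b N : cvC u l -> (forall n, (N <= n)%nat -> (Cmod (u n - c) <= b)%R) ->
  (Cmod (l - c) <= b)%R.
Proof.
  intros H1 H2. destruct (Rle_or_lt (Cmod (l - c)) b) as [|Hlt]; auto. exfalso.
  set (e := ((Cmod (l - c) - b) / 2)%R).
  destruct (H1 e ltac:(unfold e; lra)) as [N1 HN1].
  specialize (HN1 (N1 + N)%nat ltac:(lia)). specialize (H2 (N1 + N)%nat ltac:(lia)).
  assert (Cmod (l - c) <= Cmod (u (N1+N)%nat - l) + Cmod (u (N1+N)%nat - c))%R.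
  { replace (l - c) with (- (u (N1+N)%nat - l) + (u (N1+N)%nat - c)) by ring.
    eapply Rle_trans. apply Cmod_triangle. rewrite Cmod_opp. lra. }
  unfold e in *. lra.
Qed.

Lemma cvC_scal u l c : cvC u l -> cvC (fun n => c * u n) (c * l).
Proof.
  intros H eps He.
  destruct (H (eps / (Cmod c + 1))%R) as [N HN].
  { apply Rdiv_lt_0_compat; auto. pose proof (Cmod_ge_0 c); lra. }
  exists N. intros n Hn. replace (c * u n - c * l) with (c * (u n - l)) by ring.
  rewrite Cmod_mult. specialize (HN n Hn). pose proof (Cmod_ge_0 c).
  pose proof (Cmod_ge_0 (u n - l)).
  apply Rle_lt_trans with ((Cmod c + 1) * Cmod (u n - l))%R. nra.
  replace eps with ((Cmod c + 1) * (eps / (Cmod c + 1)))%R by (field; lra).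
  apply Rmult_lt_compat_l; lra.
Qed.

Lemma cvC_shift u l k : cvC u l -> cvC (fun n => u (k + n)%nat) l.
Proof.
  intros H eps He. destruct (H eps He) as [N HN]. exists N. intros n Hn. apply HN. lia.
Qed.

Lemma cvC_ext u v l : (forall n, u n = v n) -> cvC u l -> cvC v l.
Proof.
  intros E H eps He. destruct (H eps He) as [N HN]. exists N. intros n Hn. rewrite <- E. auto.
Qed.

Lemma fst_Cminus (x y : C) : fst (x - y) = (fst x - fst y)%R.
Proof. reflexivity. Qed.
Lemma snd_Cminus (x y : C) : snd (x - y) = (snd x - snd y)%R.
Proof. reflexivity. Qed.

Lemma lim_from_cauchy (u : nat -> C) :
  (forall eps, (0 < eps)%R -> exists N, forall n m, (N <= n)%nat -> (N <= m)%nat ->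
     (Cmod (u n - u m) < eps)%R) ->
  cvC u (real (Lim_seq (fun N => fst (u N))), real (Lim_seq (fun N => snd (u N)))).
Proof.
  intros Hc.
  assert (H1 : ex_finite_lim_seq (fun N => fst (u N))).
  { apply ex_lim_seq_cauchy_corr. intros eps. destruct (Hc eps (cond_pos eps)) as [N HN].
    exists N. intros n m Hn Hm. eapply Rle_lt_trans. 2: apply (HN n m Hn Hm).
    rewrite <- fst_Cminus. apply re_le_Cmod. }
  assert (H2 : ex_finite_lim_seq (fun N => snd (u N))).
  { apply ex_lim_seq_cauchy_corr. intros eps. destruct (Hc eps (cond_pos eps)) as [N HN].
    exists N. intros n m Hn Hm. eapply Rle_lt_trans. 2: apply (HN n m Hn Hm).
    rewrite <- snd_Cminus. pose proof (Rmax_Cmod (u n - u m)). pose proof (Rmax_r (Rabs (fst (u n - u m))) (Rabs (snd (u n - u m)))). lra. }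
  pose proof (Lim_seq_correct' _ H1) as L1. pose proof (Lim_seq_correct' _ H2) as L2.
  apply ex_finite_lim_seq_correct in H1. apply ex_finite_lim_seq_correct in H2.
  destruct H1 as [_ F1]. destruct H2 as [_ F2].
  rewrite <- F1 in L1. rewrite <- F2 in L2.
  apply is_lim_seq_spec in L1. apply is_lim_seq_spec in L2.
  intros eps He.
  destruct (L1 (mkposreal (eps/2) ltac:(lra))) as [N1 HN1].
  destruct (L2 (mkposreal (eps/2) ltac:(lra))) as [N2 HN2].
  exists (N1 + N2)%nat. intros n Hn.
  specialize (HN1 n ltac:(lia)). specialize (HN2 n ltac:(lia)). simpl in HN1, HN2.
  eapply Rle_lt_trans. apply Cmod_2Rmax. simpl fst; simpl snd.
  pose proof sqrt2_lt_2. pose proof (sqrt_pos 2).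
  assert (Rmax (Rabs (fst (u n) - real (Lim_seq (fun N : nat => fst (u N)))))
      (Rabs (snd (u n) - real (Lim_seq (fun N : nat => snd (u N))))) < eps / 2)%R.
  { apply Rmax_lub_lt; auto. }
  assert (0 <= Rmax (Rabs (fst (u n) - real (Lim_seq (fun N : nat => fst (u N)))))
      (Rabs (snd (u n) - real (Lim_seq (fun N : nat => snd (u N))))))%R.
  { eapply Rle_trans. apply Rabs_pos. apply Rmax_l. }
  set (R0 := Rmax _ _) in *. nra.
Qed.

Lemma tail_small (s c eps : R) : (0 <= s < 1)%R -> (0 <= c)%R -> (0 < eps)%R ->
  exists N, forall n, (N <= n)%nat -> (c * s ^ n < eps)%R.
Proof.
  intros Hs Hc He.
  destruct (pow_lt_1_zero s ltac:(rewrite Rabs_pos_eq; lra) (eps / (c + 1))%R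
    ltac:(apply Rdiv_lt_0_compat; lra)) as [N HN].
  exists N. intros n Hn. specialize (HN n Hn). rewrite Rabs_pos_eq in HN by (apply pow_le; lra).
  pose proof (pow_le s n ltac:(lra)).
  apply Rle_lt_trans with ((c + 1) * s ^ n)%R. nra.
  replace eps with ((c + 1) * (eps / (c + 1)))%R by (field; lra).
  apply Rmult_lt_compat_l; lra.
Qed.

Lemma qpoch_diff' a q N n : (Cmod q < 1)%R -> (N <= n)%nat ->
  (Cmod (qpoch a q n - qpoch a q N) <= Ebd a q * Cmod a / (1 - Cmod q) * Cmod q ^ N)%R.
Proof.
  intros Hs Hn. replace n with (N + (n - N))%nat by lia.
  eapply Rle_trans. apply qpoch_diff; auto.
  pose proof (Cmod_ge_0 q). pose proof (Cmod_ge_0 a). pose proof (pow_le (Cmod q) N H).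
  pose proof (pow_le (Cmod q) (n - N) H). assert (0 < Ebd a q) by apply exp_pos.
  unfold Rdiv. rewrite !Rmult_assoc. apply Rmult_le_compat_l. lra.
  apply Rmult_le_compat_l. lra.
  assert (0 < / (1 - Cmod q))%R by (apply Rinv_0_lt_compat; lra).
  rewrite (Rmult_comm (/ _)), <- Rmult_assoc.
  apply Rmult_le_compat_r. lra. nra.
Qed.

Lemma cv_qpinf a q : (Cmod q < 1)%R -> cvC (qpoch a q) (qpinf a q).
Proof.
  intros Hs. unfold qpinf. apply lim_from_cauchy.
  intros eps He. pose proof (Cmod_ge_0 q). pose proof (Cmod_ge_0 a).
  assert (0 < Ebd a q) by apply exp_pos.
  destruct (tail_small (Cmod q) (Ebd a q * Cmod a / (1 - Cmod q)) (eps / 2)) as [N HN]; try lra.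
  { apply Rdiv_le_0_compat. nra. lra. }
  exists N. intros n m Hn Hm.
  replace (qpoch a q n - qpoch a q m) with ((qpoch a q n - qpoch a q N) + - (qpoch a q m - qpoch a q N)) by ring.
  eapply Rle_lt_trans. apply Cmod_triangle. rewrite Cmod_opp.
  pose proof (qpoch_diff' a q N n Hs Hn). pose proof (qpoch_diff' a q N m Hs Hm).
  specialize (HN N (le_n N)). lra.
Qed.

Lemma qpoch_shift a q k N : qpoch a q (k + N) = qpoch a q k * qpoch (a * pow_n q k) q N.
Proof.
  induction N as [|N IH].
  - rewrite Nat.add_0_r. simpl. ring.
  - rewrite Nat.add_succ_r, !qpoch_S, IH, pow_n_add. ring.
Qed.

Lemma qpinf_shift a q k : (Cmod q < 1)%R ->
  qpinf a q = qpoch a q k * qpinf (a * pow_n q k) q.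
Proof.
  intros Hs. apply (cvC_unique (fun n => qpoch a q (k + n)%nat)).
  - apply cvC_shift, cv_qpinf; auto.
  - apply (cvC_ext (fun n => qpoch a q k * qpoch (a * pow_n q k) q n)).
    + intros n. rewrite qpoch_shift. reflexivity.
    + apply cvC_scal, cv_qpinf; auto.
Qed.

Lemma qpinf_S a q : (Cmod q < 1)%R -> qpinf a q = (1 - a) * qpinf (a * q) q.
Proof.
  intros Hs. rewrite (qpinf_shift a q 1 Hs).
  assert (E : pow_n q 1 = q) by (rewrite pow_n_S, pow_n_O; apply Cmult_1_r).
  rewrite E. f_equal. simpl. change (one : C_Ring) with (1:C). ring.
Qed.

Definition Kc (q : C) : R := (exp (1 / (1 - Cmod q)) / (1 - Cmod q))%R.

Lemma Kc_pos q : (Cmod q < 1)%R -> (0 < Kc q)%R.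
Proof. intros. unfold Kc. apply Rdiv_lt_0_compat. apply exp_pos. lra. Qed.

Lemma qpinf_bound a q : (Cmod q < 1)%R -> (Cmod a <= 1)%R ->
  (Cmod (qpinf a q - 1) <= Kc q * Cmod a)%R.
Proof.
  intros Hs Ha. pose proof (Cmod_ge_0 q). pose proof (Cmod_ge_0 a).
  apply (cvC_closure (qpoch a q) _ _ _ 0 (cv_qpinf a q Hs)).
  intros n _. replace (1 : C) with (qpoch a q 0) by reflexivity.
  eapply Rle_trans. apply (qpoch_diff' a q 0 n Hs). lia.
  simpl. rewrite Rmult_1_r. unfold Kc, Ebd.
  assert (exp (Cmod a / (1 - Cmod q)) <= exp (1 / (1 - Cmod q)))%R.
  { apply exp_mono. unfold Rdiv. apply Rmult_le_compat_r. left; apply Rinv_0_lt_compat; lra. lra. }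
  assert (0 < / (1 - Cmod q))%R by (apply Rinv_0_lt_compat; lra).
  set (X := exp (Cmod a / (1 - Cmod q))) in *. set (Y := exp (1 / (1 - Cmod q))) in *.
  set (Z := (/ (1 - Cmod q))%R) in *. unfold Rdiv. fold Z.
  assert (0 <= X * Cmod a)%R. { assert (0 < X) by apply exp_pos. nra. }
  assert (X * Cmod a <= Y * Cmod a)%R by nra. nra.
Qed.

Lemma one_minus_nz (x : C) : (Cmod x < 1)%R -> 1 - x <> 0.
Proof.
  intros H E. assert (x = 1) by (replace x with (- (1 - x) + 1) by ring; rewrite E; ring).
  subst. rewrite Cmod_1 in H. lra.
Qed.

Lemma pow_le_one (x : R) n : (0 <= x <= 1)%R -> (x ^ n <= 1)%R.
Proof. intros H. induction n; simpl. lra. pose proof (pow_le x n ltac:(lra)). nra. Qed.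

Lemma qpoch_nz a q N : (Cmod a < 1)%R -> (Cmod q < 1)%R -> qpoch a q N <> 0.
Proof.
  intros Ha Hq. pose proof (Cmod_ge_0 q). pose proof (Cmod_ge_0 a).
  induction N as [|N IH].
  - simpl. intros E. apply (f_equal Cmod) in E. rewrite Cmod_1, Cmod_0 in E. lra.
  - rewrite qpoch_S. apply Cmult_neq_0; auto. apply one_minus_nz.
    rewrite Cmod_mult, Cmod_pow_n. pose proof (pow_le (Cmod q) N H).
    assert (Cmod q ^ N <= 1)%R by (apply pow_le_one; split; lra). nra.
Qed.

Lemma qpinf_nz a q : (Cmod a < 1)%R -> (Cmod q < 1)%R -> qpinf a q <> 0.
Proof.
  intros Ha Hq. pose proof (Cmod_ge_0 q). pose proof (Cmod_ge_0 a). pose proof (Kc_pos q Hq).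
  destruct (tail_small (Cmod q) (Kc q * Cmod a) 1) as [k Hk]; try lra.
  { nra. }
  specialize (Hk k (le_n k)).
  rewrite (qpinf_shift a q k Hq). apply Cmult_neq_0. apply qpoch_nz; auto.
  assert (Hb : (Cmod (a * pow_n q k) <= 1)%R).
  { rewrite Cmod_mult, Cmod_pow_n. pose proof (pow_le (Cmod q) k H).
    assert (Cmod q ^ k <= 1)%R by (apply pow_le_one; split; lra). nra. }
  pose proof (qpinf_bound (a * pow_n q k) q Hq Hb) as B.
  rewrite Cmod_mult, Cmod_pow_n in B.
  intros E. rewrite E in B. replace (0 - 1 : C) with (- (1) : C) in B by ring.
  rewrite Cmod_opp, Cmod_1 in B. nra.
Qed.

Lemma pow_mono_le (s : R) k N : (0 <= s <= 1)%R -> (N <= k)%nat -> (s ^ k <= s ^ N)%R.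
Proof.
  intros Hs Hk. replace k with (N + (k - N))%nat by lia. rewrite pow_add.
  pose proof (pow_le s N ltac:(lra)). pose proof (pow_le_one s (k - N) Hs). nra.
Qed.

Lemma Cmod_pow_lt1 (q : C) n : (Cmod q < 1)%R -> (1 <= n)%nat -> (Cmod (pow_n q n) < 1)%R.
Proof.
  intros Hq Hn. rewrite Cmod_pow_n. pose proof (Cmod_ge_0 q).
  eapply Rle_lt_trans. apply (pow_mono_le _ n 1); auto; lra. simpl; lra.
Qed.

Lemma Cmod_pow_le1 (q : C) n : (Cmod q < 1)%R -> (Cmod (pow_n q n) <= 1)%R.
Proof. intros. rewrite Cmod_pow_n. apply pow_le_one. pose proof (Cmod_ge_0 q). lra. Qed.

Section Main.
Variable m : nat.
Variable q : C.
Hypothesis Hm : (2 <= m)%nat.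
Hypothesis Hq : (Cmod q < 1)%R.

Definition A n := qpinf (pow_n q (m * n)) (pow_n q m).
Definition D n := qpinf (pow_n q n) q.
Definition P n := A n / D n.

Lemma HQ : (Cmod (pow_n q m) < 1)%R.
Proof. apply Cmod_pow_lt1; auto; lia. Qed.

Lemma D_nz n : (1 <= n)%nat -> D n <> 0.
Proof. intros. apply qpinf_nz; auto. apply Cmod_pow_lt1; auto. Qed.

Lemma F1 n : A n = (1 - pow_n q (m * n)) * A (S n).
Proof.
  unfold A. rewrite (qpinf_S _ _ HQ). f_equal. f_equal.
  rewrite <- pow_n_add. f_equal. lia.
Qed.

Lemma F2 n : D n = (1 - pow_n q n) * D (S n).
Proof.
  unfold D. rewrite (qpinf_S _ _ Hq). f_equal. f_equal.
  rewrite pow_n_S. apply Cmult_comm.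
Qed.

Lemma F3 n : D (S n) = qpoch (pow_n q (n + 1)) q ((m - 1) * n) * D (m * n + 1).
Proof.
  unfold D. replace (S n) with (n + 1)%nat by lia. rewrite (qpinf_shift _ _ ((m-1)*n) Hq).
  f_equal. f_equal. rewrite <- pow_n_add. f_equal. destruct m as [|m']. lia. simpl. lia.
Qed.

Lemma F5 n : pow_n q n * pow_n q ((m - 1) * n) = pow_n q (m * n).
Proof. rewrite <- pow_n_add. f_equal. destruct m as [|m']. lia. simpl. lia. Qed.

Lemma term_eq n : (1 <= n)%nat -> cor7_term m q n = P n - P (S n).
Proof.
  intros Hn. unfold cor7_term, P.
  assert (EW : qpinf (pow_n q (m * n)) q = (1 - pow_n q (m * n)) * D (m * n + 1)).
  { fold (D (m * n)). rewrite F2. f_equal. f_equal. lia. }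
  assert (Hc : qpoch (pow_n q (n + 1)) q ((m - 1) * n) <> 0).
  { apply qpoch_nz; auto. apply Cmod_pow_lt1; auto; lia. }
  assert (HD' : D (m * n + 1) <> 0) by (apply D_nz; lia).
  assert (Hu : 1 - pow_n q n <> 0) by (apply one_minus_nz, Cmod_pow_lt1; auto).
  assert (Hw : 1 - pow_n q (m * n) <> 0) by (apply one_minus_nz, Cmod_pow_lt1; auto; nia).
  change (qpinf (pow_n q (m * n)) (pow_n q m)) with (A n).
  rewrite EW, (F1 n), (F2 n), (F3 n).
  rewrite <- (F5 n) in *.
  generalize dependent (A (S n)). generalize dependent (D (m * n + 1)).
  generalize dependent (qpoch (pow_n q (n + 1)) q ((m - 1) * n)).
  generalize dependent (pow_n q n). generalize dependent (pow_n q ((m - 1) * n)).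
  intros. field. repeat split; auto.
Qed.

Lemma A_bound n : (1 <= n)%nat -> (Cmod (A n - 1) <= Kc (pow_n q m) * Cmod q ^ n)%R.
Proof.
  intros Hn. unfold A. eapply Rle_trans. apply qpinf_bound. apply HQ. apply Cmod_pow_le1; auto.
  apply Rmult_le_compat_l. left; apply Kc_pos, HQ.
  rewrite Cmod_pow_n. apply pow_mono_le. pose proof (Cmod_ge_0 q); lra. nia.
Qed.

Lemma D_bound n : (Cmod (D n - 1) <= Kc q * Cmod q ^ n)%R.
Proof.
  unfold D. rewrite <- Cmod_pow_n. apply qpinf_bound; auto. apply Cmod_pow_le1; auto.
Qed.

Lemma P_lim : cvC (fun n => P (S n)) 1.
Proof.
  intros eps He. set (K := (Kc (pow_n q m) + Kc q)%R).
  pose proof (Kc_pos _ HQ). pose proof (Kc_pos _ Hq). pose proof (Cmod_ge_0 q).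
  destruct (tail_small (Cmod q) (4 * K) (Rmin 2 eps)) as [N HN]; try lra.
  { unfold K; lra. } { apply Rmin_glb_lt; lra. }
  exists N. intros n Hn. specialize (HN (S n) ltac:(lia)).
  pose proof (Rmin_l 2 eps). pose proof (Rmin_r 2 eps).
  pose proof (A_bound (S n) ltac:(lia)) as HA. pose proof (D_bound (S n)) as HD.
  pose proof (pow_le (Cmod q) (S n) H1).
  set (t := (Cmod q ^ S n)%R) in *.
  assert (HDn : D (S n) <> 0) by (apply D_nz; lia).
  unfold P. replace (A (S n) / D (S n) - 1) with ((A (S n) - D (S n)) / D (S n)) by (field; auto).
  rewrite Cmod_div by auto.
  assert (HAD : (Cmod (A (S n) - D (S n)) <= 2 * K * t)%R).
  { replace (A (S n) - D (S n)) with ((A (S n) - 1) + - (D (S n) - 1)) by ring.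
    eapply Rle_trans. apply Cmod_triangle. rewrite Cmod_opp. unfold K. nra. }
  assert (HDm : (1 / 2 <= Cmod (D (S n)))%R).
  { assert (HH : (Cmod 1 <= Cmod (- (D (S n) - 1)) + Cmod (D (S n)))%R).
    { replace (1 : C) with (- (D (S n) - 1) + D (S n)) at 1 by ring. apply Cmod_triangle. }
    rewrite Cmod_opp, Cmod_1 in HH. unfold K in *. nra. }
  set (x := Cmod (A (S n) - D (S n))) in *. set (y := Cmod (D (S n))) in *.
  apply Rle_lt_trans with (4 * K * t)%R; [|lra].
  unfold Rdiv. assert (0 < / y)%R by (apply Rinv_0_lt_compat; lra).
  assert (y * / y = 1)%R by (field; lra).
  assert (0 <= x)%R by apply Cmod_ge_0. nra.
Qed.

Lemma tele N : sum_n (fun n => cor7_term m q (S n)) N = P 1 - P (S (S N)).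
Proof.
  induction N as [|N IH].
  - rewrite sum_O. apply term_eq; lia.
  - rewrite sum_Sn, IH. change (plus ?x ?y) with (Cplus x y). rewrite term_eq by lia. match goal with |- ?a = ?b => change (@eq C a b) end. ring.
Qed.

Lemma P1_eq : P 1 = Cdiv (qpinf (pow_n q m) (pow_n q m)) (qpinf q q).
Proof.
  unfold P, A, D. rewrite Nat.mul_1_r.
  assert (E : pow_n q 1 = q) by (rewrite pow_n_S, pow_n_O; apply Cmult_1_r).
  rewrite E. reflexivity.
Qed.

End Main.

Theorem corollary7 (m : nat) (q : C) :
  (2 <= m)%nat -> (Cmod q < 1)%R ->
  is_series (fun n : nat => cor7_term m q (S n))
    (Cplus (Copp 1%C) (Cdiv (qpinf (pow_n q m) (pow_n q m)) (qpinf q q))).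
Proof.
  intros Hm Hq. unfold is_series. apply filterlim_locally. intros eps.
  destruct (P_lim m q Hm Hq eps (cond_pos eps)) as [N HN].
  exists N. intros n Hn. apply C_NormedModule_mixin_compat1.
  change (minus ?x ?y) with (Cminus x y). rewrite tele by auto. rewrite <- P1_eq by auto.
  specialize (HN (S n) ltac:(lia)).
  replace (P m q 1 - P m q (S (S n)) - (- (1) + P m q 1)) with (- (P m q (S (S n)) - 1)) by ring.
  rewrite Cmod_opp. exact HN.
Qed.
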